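(* Let $\mathcal A=\{1,\dots,I\}$ with $I\ge1$, let $d_a\ge1$ be integers for $a\in\mathcal A$ and $d_0,d_\infty\ge0$ integers; let $\hat{\mathcal A}$ be $\mathcal A$ together with $0$ if $d_0>0$ and $\infty$ if $d_\infty>0$; let $x_a,s_a$ ($a\in\mathcal A$) be reals with $0<|x_a|<1$, and set $x_0=1$, $s_0=d_0+1$, $x_\infty=-1$, $s_\infty=-(d_\infty+1)$; set $m=\sum_{a\in\hat{\mathcal A}}d_a+1$, $p_c(t)=\prod_{a\in\hat{\mathcal A}}(1+x_at)^{d_a}$ and, for $c\in(-1,1)$, $$\beta_{r,k}(c)=\int_{-1}^1\Big(\sum_{a\in\hat{\mathcal A}}\frac{x_ad_as_a}{1+x_at}\Big)p_c(t)t^r(ct+1)^k\,dt+\big((-1)^r(1-c)^kp_c(-1)+(1+c)^kp_c(1)\big).$$ Then for any integer $l\ge m$, $$\beta_{0,-l}=\frac{\gamma_0(c)+o(1-c)}{(1-c)^{l-d_0}}=\frac{\gamma_\infty(c)+o(1+c)}{(1+c)^{l-d_\infty}},$$ where $\gamma_0$ and $\gamma_\infty$ are smooth functions defined on open neighbourhoods of $c=1$ and $c=-1$ respectively, with $\gamma_0(1)>0$ and $\gamma_\infty(-1)>0$.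
   Context: Here $o(x)$ denotes a function which is smooth in a neighbourhood of $x=0$ and satisfies $o(0)=0$ (different occurrences may denote different such functions); the equalities hold for $c\in(-1,1)$ near $1$, resp. near $-1$. In the paper these quantities arise from admissible data over a local product of nonnegative CSCK metrics, where $s_a$ is the normalized scalar curvature ($\pm g_a$ has scalar curvature $\pm2d_as_a$) and $x_a$ has the sign of $g_a$. *)

(* Defs.v *)
From Stdlib Require Import Reals ZArith.
From Coquelicot Require Import Coquelicot.
Open Scope R_scope.

Fixpoint sum_upto (n : nat) (f : nat -> R) : R :=
  match n with O => 0 | S k => sum_upto k f + f k end.
Fixpoint prod_upto (n : nat) (f : nat -> R) : R :=
  match n with O => 1 | S k => prod_upto k f * f k end.

(* The index set A = {1..I} is encoded as {0..I-1}; the extra indices 0 and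
   infinity of \hat A carry x_0 = 1, s_0 = d0+1, x_inf = -1, s_inf = -(dinf+1).
   When d0 = 0 (resp. dinf = 0) the corresponding terms below are literally
   0 (resp. factor 1), so including them unconditionally is exactly the same
   as summing/multiplying over \hat A. *)

Definition m_of (I : nat) (d : nat -> nat) (d0 dinf : nat) : nat :=
  (List.fold_right Nat.add 0 (List.map d (List.seq 0 I)) + d0 + dinf + 1)%nat.

Definition pc (I : nat) (x : nat -> R) (d : nat -> nat) (d0 dinf : nat) (t : R) : R :=
  prod_upto I (fun a => (1 + x a * t) ^ (d a)) * (1 + 1 * t) ^ d0 * (1 + (-1) * t) ^ dinf.

Definition Ssum (I : nat) (x s : nat -> R) (d : nat -> nat) (d0 dinf : nat) (t : R) : R :=
  sum_upto I (fun a => x a * INR (d a) * s a / (1 + x a * t))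
  + 1 * INR d0 * (INR d0 + 1) / (1 + 1 * t)
  + (-1) * INR dinf * (- (INR dinf + 1)) / (1 + (-1) * t).

Definition beta (I : nat) (x s : nat -> R) (d : nat -> nat) (d0 dinf : nat)
    (r : nat) (k : Z) (c : R) : R :=
  RInt (fun t => Ssum I x s d d0 dinf t * pc I x d d0 dinf t * t ^ r * powerRZ (c * t + 1) k)
       (-1) 1
  + ((-1) ^ r * powerRZ (1 - c) k * pc I x d d0 dinf (-1)
     + powerRZ (1 + c) k * pc I x d d0 dinf 1).

Definition smooth_near (f : R -> R) (x0 : R) : Prop :=
  exists eps : R, 0 < eps /\
    forall (n : nat) (y : R), Rabs (y - x0) < eps -> ex_derive_n f n y.

(* Main.v *)
Require Import Defs.
From Stdlib Require Import Reals ZArith Lia Lra Psatz List.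
From Coquelicot Require Import Coquelicot.
Open Scope R_scope.

Inductive Alg : (R -> R) -> Prop :=
| Alg_const a : Alg (fun _ => a)
| Alg_id : Alg (fun y => y)
| Alg_inv : Alg (fun y => / y)
| Alg_inv1 : Alg (fun y => / (1 + y))
| Alg_plus f g : Alg f -> Alg g -> Alg (fun y => f y + g y)
| Alg_mult f g : Alg f -> Alg g -> Alg (fun y => f y * g y)
| Alg_ext f g : Alg f -> (forall y, 0 < y -> f y = g y) -> Alg g.

Lemma loc_pos (y : R) (P : R -> Prop) : 0 < y -> (forall z, 0 < z -> P z) -> locally y P.
Proof.
  intros Hy HP. apply (filter_imp (fun z => 0 < z)). exact HP.
  apply (open_gt 0 y Hy).
Qed.

Lemma Alg_deriv f : Alg f -> exists f', Alg f' /\ forall y, 0 < y -> is_derive f y (f' y).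
Proof.
  induction 1.
  - exists (fun _ => 0). split. constructor. intros y _. auto_derive; auto.
  - exists (fun _ => 1). split. constructor. intros y _. auto_derive; auto.
  - exists (fun y => -1 * (/ y * / y)). split.
    + apply Alg_mult. constructor. apply Alg_mult; constructor.
    + intros y Hy. auto_derive. lra. field. lra.
  - exists (fun y => -1 * (/ (1+y) * / (1+y))). split.
    + apply Alg_mult. constructor. apply Alg_mult; constructor.
    + intros y Hy. auto_derive. lra. field. lra.
  - destruct IHAlg1 as [f' [A1 D1]]. destruct IHAlg2 as [g' [A2 D2]].
    exists (fun y => f' y + g' y). split. now apply Alg_plus.
    intros y Hy. apply (is_derive_plus f g y (f' y) (g' y)); auto.
  - destruct IHAlg1 as [f' [A1 D1]]. destruct IHAlg2 as [g' [A2 D2]].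
    exists (fun y => f' y * g y + f y * g' y). split.
    apply Alg_plus; apply Alg_mult; auto.
    intros y Hy. eapply is_derive_ext. 2: apply (is_derive_mult f g y (f' y) (g' y)); auto.
    reflexivity. simpl. intros. unfold plus, mult; simpl. unfold mult; simpl. ring.
  - destruct IHAlg as [f' [A1 D1]]. exists f'. split; auto.
    intros y Hy. apply (is_derive_ext_loc f g). apply loc_pos; auto. auto.
Qed.

Lemma Alg_Dn f : Alg f -> forall n, exists h, Alg h /\ forall y, 0 < y -> Derive_n f n y = h y /\ ex_derive_n f n y.
Proof.
  intros Hf n. induction n.
  - exists f. split; auto. intros; simpl; auto.
  - destruct IHn as [h [Ah Eh]]. destruct (Alg_deriv h Ah) as [h' [Ah' Dh']].
    exists h'. split; auto. intros y Hy.
    assert (L : locally y (fun t => h t = Derive_n f n t)).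
    { apply loc_pos; auto. intros z Hz. symmetry. apply Eh; auto. }
    split.
    + simpl. rewrite <- (Derive_ext_loc h (Derive_n f n) y L).
      apply is_derive_unique. auto.
    + simpl. apply (ex_derive_ext_loc h (Derive_n f n) y L).
      exists (h' y). auto.
Qed.

Lemma Alg_smooth f : Alg f -> smooth_near f 1.
Proof.
  intros Hf. exists (/2). split. lra. intros n y Hy.
  destruct (Alg_Dn f Hf n) as [h [_ E]]. apply E.
  apply Rabs_def2 in Hy. lra.
Qed.

Lemma Alg_pow f k : Alg f -> Alg (fun y => f y ^ k).
Proof.
  intros Hf. induction k. simpl. constructor.
  apply (Alg_ext (fun y => f y * f y ^ k)). now apply Alg_mult. intros; reflexivity.
Qed.

Lemma Alg_opp f : Alg f -> Alg (fun y => - f y).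
Proof. intros. apply (Alg_ext (fun y => -1 * f y)). apply Alg_mult; auto. constructor. intros; ring. Qed.

Lemma Alg_minus f g : Alg f -> Alg g -> Alg (fun y => f y - g y).
Proof. intros. apply Alg_plus; auto. now apply Alg_opp. Qed.

Lemma smooth_opp f : smooth_near f 1 -> smooth_near (fun y => f (- y)) (-1).
Proof.
  intros [eps [He H]]. exists eps. split; auto. intros n y Hy.
  apply ex_derive_n_comp_opp.
  assert (Hy' : Rabs (- y - 1) < eps). { replace (-y-1) with (-(y - -1)) by ring. now rewrite Rabs_Ropp. }
  apply (filter_imp (fun z => Rabs (z - 1) < eps)).
  intros z Hz k _. apply H; auto.
  assert (Hp : 0 < eps - Rabs (- y - 1)) by lra.
  exists (mkposreal _ Hp). intros z Hz. simpl in Hz.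
  unfold ball in Hz; simpl in Hz; unfold AbsRing_ball, abs, minus, plus, opp in Hz; simpl in Hz.
  replace (z - 1) with ((z + - - y) + (- y - 1)) by ring.
  eapply Rle_lt_trans. apply Rabs_triang. lra.
Qed.

Fixpoint gfun (j n : nat) (c : R) : R :=
  match j with
  | O => (1 - (1 - c) ^ (S n) * (/ (1 + c)) ^ (S n)) * / c * / INR (S n)
  | S j' => (gfun j' n c - gfun j' (S n) c) * / c
  end.

Lemma int_mono j : forall n c, 0 < c < 1 ->
  is_RInt (fun t => (1 + t) ^ j / (1 + c * t) ^ (n + j + 2)) (-1) 1 (gfun j n c / (1 - c) ^ (S n)).
Proof.
  induction j; intros n c Hc.
  - assert (Hn : INR (S n) <> 0) by (apply not_0_INR; lia).
    assert (Hpos : forall t, -1 <= t <= 1 -> 0 < 1 + c * t) by (intros; nra).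
    assert (D0 : forall N, N <> 0 -> forall t, Rmin (-1) 1 <= t <= Rmax (-1) 1 ->
       is_derive (fun t => - / (c * N * (1 + c * t) ^ (S n))) t (INR (S n) * / N * / (1 + c * t) ^ (n + 2))).
    { intros N HN t Ht. rewrite Rmin_left in Ht by lra. rewrite Rmax_right in Ht by lra.
      specialize (Hpos t Ht). auto_derive.
      apply Rmult_integral_contrapositive; split. 
      apply Rmult_integral_contrapositive; split; lra. apply (pow_nonzero _ (S n)); lra.
      replace (n+2)%nat with (S (S n)) by lia. simpl pow.
      replace (match n with | 0%nat => 1 | S _ => INR n + 1 end) with (INR (S n)) by reflexivity.
      field. split. apply (pow_nonzero _ n); lra. split. lra. split; auto. lra. }
    assert (D : forall t, Rmin (-1) 1 <= t <= Rmax (-1) 1 ->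
       is_derive (fun t => - / (c * INR (S n) * (1 + c * t) ^ (S n))) t (/ (1 + c * t) ^ (n + 2))).
    { intros t Ht. replace (/ (1 + c*t)^(n+2)) with (INR (S n) * / INR (S n) * / (1 + c * t) ^ (n + 2)).
      apply D0; auto. field. split; auto. apply pow_nonzero.
      rewrite Rmin_left in Ht by lra. rewrite Rmax_right in Ht by lra. specialize (Hpos t Ht). lra. }
    assert (C : forall t, Rmin (-1) 1 <= t <= Rmax (-1) 1 -> continuous (fun t => / (1 + c * t) ^ (n + 2)) t).
    { intros t Ht. rewrite Rmin_left in Ht by lra. rewrite Rmax_right in Ht by lra.
      specialize (Hpos t Ht). apply (ex_derive_continuous (K:=R_AbsRing) (V:=R_NormedModule)). auto_derive.
      apply pow_nonzero; lra. }
    assert (H := is_RInt_derive _ _ _ _ D C).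
    idtac.
    assert (E : gfun 0 n c / (1-c)^S n = (- / (c*INR(S n)*(1+c*1)^S n)) - (- / (c*INR(S n)*(1+c*(-1))^S n))).
    { unfold gfun. rewrite !pow_inv.
      replace (c * -1) with (- c) by ring. replace (c * 1) with c by ring.
      replace (1 + - c) with (1 - c) by ring.
      field; repeat split; try lra; try (apply pow_nonzero; lra); auto. }
    rewrite E.
    eapply is_RInt_ext. 2: exact H.
    intros t Ht. simpl. replace (n+0+2)%nat with (n+2)%nat by lia. unfold Rdiv; ring.
  - assert (H1 := IHj n c Hc). assert (H2 := IHj (S n) c Hc).
    assert (Hpos : forall t, -1 <= t <= 1 -> 0 < 1 + c * t) by (intros; nra).
    apply (is_RInt_scal _ _ _ (1 - c)) in H2.
    assert (H3 := is_RInt_minus _ _ _ _ _ _ H1 H2).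
    apply (is_RInt_scal _ _ _ (/ c)) in H3.
    eapply is_RInt_ext.
    2: { replace (gfun (S j) n c / (1 - c) ^ S n) with
           (scal (/ c) (minus (gfun j n c / (1 - c) ^ S n) (scal (1 - c) (gfun j (S n) c / (1 - c) ^ S (S n))))).
         exact H3.
         unfold scal, minus, plus, opp; simpl. unfold mult; simpl.
         field; repeat split; try lra; try (apply pow_nonzero; lra). }
    intros t Ht. rewrite Rmin_left in Ht by lra. rewrite Rmax_right in Ht by lra.
    specialize (Hpos t (conj (Rlt_le _ _ (proj1 Ht)) (Rlt_le _ _ (proj2 Ht)))).
    unfold scal, minus, plus, opp; simpl. unfold mult; simpl.
    replace (S n + j + 2)%nat with (S (n + j + 2)) by lia.
    replace (n + S j + 2)%nat with (S (n + j + 2)) by lia.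
    simpl pow. field; repeat split; try lra; try (apply pow_nonzero; lra).
Qed.

Fixpoint hn (l : list R) (u : R) : R :=
  match l with nil => 0 | a :: r => a + u * hn r u end.

Fixpoint Gl (k L : nat) (l : list R) (c : R) : R :=
  match l with
  | nil => 0
  | a :: r => a * gfun k (L - k - 2) c + (1 - c) * Gl (S k) L r c
  end.

Lemma int_poly l : forall k L c, 0 < c < 1 -> (k + length l + 1 <= L)%nat ->
  is_RInt (fun t => (1 + t) ^ k * hn l (1 + t) / (1 + c * t) ^ L) (-1) 1
          (Gl k L l c / (1 - c) ^ (L - k - 1)).
Proof.
  induction l as [|a r IH]; intros k L c Hc HL.
  - simpl. replace (0 / (1 - c) ^ (L - k - 1)) with (scal (1 - -1) (0:R)).
    eapply is_RInt_ext. 2: apply (is_RInt_const (-1) 1 0).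
    intros t _. simpl. unfold Rdiv. ring.
    unfold scal; simpl; unfold mult; simpl; unfold Rdiv; ring.
  - simpl in HL.
    assert (H1 := int_mono k (L - k - 2) c Hc).
    replace (L - k - 2 + k + 2)%nat with L in H1 by lia.
    apply (is_RInt_scal _ _ _ a) in H1.
    assert (H2 := IH (S k) L c Hc ltac:(lia)).
    assert (H3 := is_RInt_plus _ _ _ _ _ _ H1 H2).
    replace (Gl k L (a :: r) c / (1 - c) ^ (L - k - 1)) with
      (plus (scal a (gfun k (L - k - 2) c / (1 - c) ^ S (L - k - 2)))
            (Gl (S k) L r c / (1 - c) ^ (L - S k - 1))).
    + eapply is_RInt_ext. 2: exact H3.
      intros t _. unfold scal, plus; simpl. unfold mult; simpl. unfold Rdiv. ring.
    + unfold scal, plus; simpl. unfold mult; simpl.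
      replace (L - k - 1)%nat with (S (L - k - 2)) by lia.
      replace (L - S k - 1)%nat with (L - k - 2)%nat by lia.
      simpl pow. field. split. apply pow_nonzero; lra. lra.
Qed.

Lemma gfun_one j : forall n, gfun j n 1 = INR (fact j) * INR (fact n) / INR (fact (n + j + 1)).
Proof.
  induction j; intros n.
  - cbn [gfun]. replace (n + 0 + 1)%nat with (S n) by lia.
    rewrite fact_simpl, mult_INR. change (fact 0) with 1%nat.
    replace (1 - 1) with 0 by ring. simpl pow. rewrite Rmult_0_l, Rmult_0_l, Rminus_0_r. change (INR 1) with 1.
    field; repeat split; try apply INR_fact_neq_0; try (apply not_0_INR; lia).
  - cbn [gfun]. rewrite !IHj.
    replace (n + S j + 1)%nat with (S (n + j + 1)) by lia.
    replace (S n + j + 1)%nat with (S (n + j + 1)) by lia.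
    rewrite !fact_simpl, !mult_INR.
    replace (INR (S (n + j + 1))) with (INR (S n) + INR (S j)) by (rewrite <- plus_INR; f_equal; lia).
    field. repeat split; try apply INR_fact_neq_0.
    rewrite <- plus_INR. apply not_0_INR; lia.
Qed.

Lemma gfun_one_pos j n : 0 < gfun j n 1.
Proof.
  rewrite gfun_one. unfold Rdiv. apply Rmult_lt_0_compat. apply Rmult_lt_0_compat; apply lt_0_INR, lt_O_fact.
  apply Rinv_0_lt_compat. apply lt_0_INR, lt_O_fact.
Qed.

Lemma Alg_gfun j : forall n, Alg (gfun j n).
Proof.
  induction j; intros n; cbn [gfun].
  - apply Alg_mult. apply Alg_mult. apply Alg_minus. constructor.
    apply Alg_mult; apply Alg_pow. apply Alg_minus; constructor. constructor.
    constructor. constructor.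
  - apply Alg_mult. apply Alg_minus; auto. constructor.
Qed.

Lemma Alg_Gl l : forall k L, Alg (Gl k L l).
Proof.
  induction l; intros k L; simpl.
  - constructor.
  - apply Alg_plus. apply Alg_mult. constructor. apply Alg_gfun.
    apply Alg_mult. apply Alg_minus; constructor. auto.
Qed.

Lemma Gl_one l k L : Gl k L l 1 = hn l 0 * gfun k (L - k - 2) 1.
Proof. destruct l; simpl; ring. Qed.

Fixpoint ladd (l1 l2 : list R) : list R :=
  match l1, l2 with
  | nil, _ => l2
  | _, nil => l1
  | a :: r, b :: q => (a + b) :: ladd r q
  end.
Definition lscal (k : R) (l : list R) := map (fun a => k * a) l.
Fixpoint lmul (l1 l2 : list R) : list R :=
  match l1 with nil => nil | a :: r => ladd (lscal a l2) (0 :: lmul r l2) end.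

Lemma hn_add l1 : forall l2 u, hn (ladd l1 l2) u = hn l1 u + hn l2 u.
Proof. induction l1; intros [|b q] u; simpl; try ring. rewrite IHl1. ring. Qed.
Lemma len_add l1 : forall l2, length (ladd l1 l2) = Nat.max (length l1) (length l2).
Proof. induction l1; intros [|b q]; simpl; auto. Qed.
Lemma hn_scal k l u : hn (lscal k l) u = k * hn l u.
Proof. unfold lscal. induction l; simpl; [ring|]. rewrite IHl. ring. Qed.
Lemma len_scal k l : length (lscal k l) = length l.
Proof. apply length_map. Qed.
Lemma hn_mul l1 : forall l2 u, hn (lmul l1 l2) u = hn l1 u * hn l2 u.
Proof. induction l1; intros l2 u; simpl. ring. rewrite hn_add, hn_scal. simpl. rewrite IHl1. ring. Qed.
Lemma len_mul l1 : forall l2, (length (lmul l1 l2) <= length l1 + pred (length l2))%nat.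
Proof. induction l1; intros l2; simpl. lia. rewrite len_add, len_scal. simpl. specialize (IHl1 l2). lia. Qed.

Definition Poly (n : nat) (f : R -> R) : Prop :=
  exists l, (length l <= n)%nat /\ forall t, f t = hn l (1 + t).

Lemma Poly_ext n f g : Poly n f -> (forall t, f t = g t) -> Poly n g.
Proof. intros [l [H1 H2]] E. exists l. split; auto. intros t. rewrite <- E. auto. Qed.
Lemma Poly_mono n m f : Poly n f -> (n <= m)%nat -> Poly m f.
Proof. intros [l [H1 H2]] E. exists l. split; auto. lia. Qed.
Lemma Poly_zero n : Poly n (fun _ => 0).
Proof. exists nil. simpl. split. lia. auto. Qed.
Lemma Poly_const a : Poly 1 (fun _ => a).
Proof. exists (a :: nil). simpl. split. lia. intros; ring. Qed.
Lemma Poly_lin a b : Poly 2 (fun t => a + b * t).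
Proof. exists ((a - b) :: b :: nil). simpl. split. lia. intros; ring. Qed.
Lemma Poly_add n f g : Poly n f -> Poly n g -> Poly n (fun t => f t + g t).
Proof.
  intros [l1 [H1 E1]] [l2 [H2 E2]]. exists (ladd l1 l2). rewrite len_add. split. lia.
  intros t. rewrite hn_add, E1, E2. auto.
Qed.
Lemma Poly_scal n k f : Poly n f -> Poly n (fun t => k * f t).
Proof.
  intros [l1 [H1 E1]]. exists (lscal k l1). rewrite len_scal. split. lia.
  intros t. rewrite hn_scal, E1. auto.
Qed.
Lemma Poly_mul n m f g : Poly n f -> Poly m g -> Poly (n + pred m) (fun t => f t * g t).
Proof.
  intros [l1 [H1 E1]] [l2 [H2 E2]]. exists (lmul l1 l2). split.
  pose proof (len_mul l1 l2). lia.
  intros t. rewrite hn_mul, E1, E2. auto.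
Qed.
Lemma Poly_pow a b k : Poly (S k) (fun t => (a + b * t) ^ k).
Proof.
  induction k. simpl. apply Poly_const.
  apply Poly_mono with (S k + pred 2)%nat. 2: lia.
  apply (Poly_ext (S k + pred 2) (fun t => (a + b * t) ^ k * (a + b * t))).
  apply Poly_mul; auto. apply Poly_lin.
  intros t. simpl. ring.
Qed.

Fixpoint sumd (d : nat -> nat) (I : nat) : nat :=
  match I with O => O | S k => (sumd d k + d k)%nat end.

Lemma fold_add_gen l : forall a, List.fold_right Nat.add a l = (List.fold_right Nat.add 0 l + a)%nat.
Proof. induction l; intros; simpl; auto. rewrite IHl. lia. Qed.

Lemma m_of_eq I d d0 dinf : m_of I d d0 dinf = (sumd d I + d0 + dinf + 1)%nat.
Proof.
  unfold m_of. f_equal. f_equal. f_equal.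
  induction I. reflexivity.
  rewrite seq_S, map_app, fold_right_app. simpl. rewrite fold_add_gen, IHI. lia.
Qed.

Lemma prod_upto_ext I f g : (forall b, (b < I)%nat -> f b = g b) -> prod_upto I f = prod_upto I g.
Proof. induction I; intros H; simpl; auto. rewrite IHI by auto. rewrite H by lia. auto. Qed.
Lemma sum_upto_ext I f g : (forall b, (b < I)%nat -> f b = g b) -> sum_upto I f = sum_upto I g.
Proof. induction I; intros H; simpl; auto. rewrite IHI by auto. rewrite H by lia. auto. Qed.
Lemma sum_upto_mulr I f K : sum_upto I f * K = sum_upto I (fun a => f a * K).
Proof. induction I; simpl. ring. rewrite <- IHI. ring. Qed.
Lemma prod_upto_pos I f : (forall b, (b < I)%nat -> 0 < f b) -> 0 < prod_upto I f.
Proof. induction I; intros H; simpl. lra. apply Rmult_lt_0_compat; auto. Qed.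

Lemma Poly_sum n I F : (forall a, (a < I)%nat -> Poly n (F a)) -> Poly n (fun t => sum_upto I (fun a => F a t)).
Proof.
  induction I; intros H; simpl. apply Poly_zero.
  apply (Poly_add n (fun t => sum_upto I (fun a => F a t)) (F I)); auto.
Qed.

Lemma Poly_prod (y : nat -> R) (e : nat -> nat) I :
  Poly (S (sumd e I)) (fun t => prod_upto I (fun b => (1 + y b * t) ^ e b)).
Proof.
  induction I. apply (Poly_const 1).
  simpl. replace (S (sumd e I + e I)) with (S (sumd e I) + pred (S (e I)))%nat by lia.
  apply (Poly_mul _ _ (fun t => prod_upto I (fun b => (1 + y b * t) ^ e b)) (fun t => (1 + y I * t) ^ e I)); auto.
  apply Poly_pow.
Qed.

Definition Q0 I (x : nat -> R) d t := prod_upto I (fun b => (1 + x b * t) ^ d b).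
Definition qa I (x : nat -> R) (d : nat -> nat) a t :=
  prod_upto I (fun b => (1 + x b * t) ^ (if Nat.eqb b a then (d b - 1)%nat else d b)).

Lemma qa_mul I x d a t : (a < I)%nat -> (1 <= d a)%nat -> qa I x d a t * (1 + x a * t) = Q0 I x d t.
Proof.
  unfold qa, Q0. induction I; intros Ha Hd. lia.
  simpl. destruct (Nat.eq_dec a I).
  - subst a. rewrite Nat.eqb_refl.
    rewrite (prod_upto_ext I _ (fun b => (1 + x b * t) ^ d b)).
    replace (d I) with (S (d I - 1)) at 2 by lia. simpl. ring.
    intros b Hb. replace (Nat.eqb b I) with false. auto. symmetry. apply Nat.eqb_neq. lia.
  - replace (Nat.eqb I a) with false by (symmetry; apply Nat.eqb_neq; lia).
    rewrite <- IHI by lia. ring.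
Qed.

Lemma sum_e I d a : (1 <= d a)%nat ->
  (sumd (fun b => if Nat.eqb b a then (d b - 1)%nat else d b) I + (if Nat.ltb a I then 1 else 0) = sumd d I)%nat.
Proof.
  intros Hd. induction I. simpl. auto.
  simpl. revert IHI. destruct (Nat.eqb_spec I a); destruct (Nat.ltb_spec a (S I)); destruct (Nat.ltb_spec a I); intros; try lia; subst; lia.
Qed.

Lemma lin_pos y t : Rabs y < 1 -> -1 <= t <= 1 -> 0 < 1 + y * t.
Proof.
  intros Hy Ht. assert (Rabs (y * t) < 1).
  { rewrite Rabs_mult. assert (Rabs t <= 1) by (apply Rabs_le; lra).
    pose proof (Rabs_pos y). pose proof (Rabs_pos t). nra. }
  apply Rabs_def2 in H. destruct H. lra.
Qed.

Definition Rz0 I x s d dinf t :=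
  sum_upto I (fun a => x a * INR (d a) * s a * qa I x d a t) * (1 + -1 * t) ^ dinf
  + INR dinf * (INR dinf + 1) * (Q0 I x d t * (1 + -1 * t) ^ (dinf - 1)).
Definition Qd I x d dinf t := Q0 I x d t * (1 + -1 * t) ^ dinf.

Lemma key I x s d d0 dinf t :
  (forall a, (a < I)%nat -> (1 <= d a)%nat) ->
  (forall a, (a < I)%nat -> 0 < Rabs (x a) < 1) -> -1 < t < 1 ->
  Ssum I x s d d0 dinf t * pc I x d d0 dinf t
  = (1 + 1 * t) ^ d0 * Rz0 I x s d dinf t + INR d0 * (INR d0 + 1) * ((1 + 1 * t) ^ (d0 - 1) * Qd I x d dinf t).
Proof.
  intros Hd Hx Ht.
  assert (E1 : sum_upto I (fun a => x a * INR (d a) * s a / (1 + x a * t)) * Q0 I x d t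
             = sum_upto I (fun a => x a * INR (d a) * s a * qa I x d a t)).
  { rewrite sum_upto_mulr. apply sum_upto_ext. intros a Ha.
    rewrite <- (qa_mul I x d a t) by auto.
    assert (0 < 1 + x a * t). { specialize (Hx a Ha). apply lin_pos; lra. }
    field. lra. }
  assert (E2 : 1 * INR d0 * (INR d0 + 1) / (1 + 1 * t) * (1 + 1 * t) ^ d0
             = INR d0 * (INR d0 + 1) * (1 + 1 * t) ^ (d0 - 1)).
  { destruct d0. simpl. field. lra. replace (S d0 - 1)%nat with d0 by lia. simpl. field. lra. }
  assert (E3 : (-1) * INR dinf * (- (INR dinf + 1)) / (1 + (-1) * t) * (1 + -1 * t) ^ dinf
             = INR dinf * (INR dinf + 1) * (1 + -1 * t) ^ (dinf - 1)).
  { destruct dinf. simpl. field. lra. replace (S dinf - 1)%nat with dinf by lia. simpl. field. lra. }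
  unfold Ssum, pc. fold (Q0 I x d t).
  transitivity (sum_upto I (fun a => x a * INR (d a) * s a / (1 + x a * t)) * Q0 I x d t * (1 + 1 * t) ^ d0 * (1 + -1 * t) ^ dinf
     + (1 * INR d0 * (INR d0 + 1) / (1 + 1 * t) * (1 + 1 * t) ^ d0) * Q0 I x d t * (1 + -1 * t) ^ dinf
     + ((-1) * INR dinf * (- (INR dinf + 1)) / (1 + (-1) * t) * (1 + -1 * t) ^ dinf) * Q0 I x d t * (1 + 1 * t) ^ d0).
  ring.
  rewrite E1, E2, E3. unfold Rz0, Qd. ring.
Qed.

Lemma Poly_R0 I x s d dinf : (forall a, (a < I)%nat -> (1 <= d a)%nat) ->
  Poly (sumd d I + dinf) (Rz0 I x s d dinf).
Proof.
  intros Hd. unfold Rz0. apply Poly_add.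
  - replace (sumd d I + dinf)%nat with (sumd d I + pred (S dinf))%nat by lia.
    apply (Poly_mul _ _ (fun t => sum_upto I (fun a => x a * INR (d a) * s a * qa I x d a t))
                        (fun t => (1 + -1 * t) ^ dinf)).
    2: apply Poly_pow.
    apply (Poly_sum _ _ (fun a t => x a * INR (d a) * s a * qa I x d a t)).
    intros a Ha. apply Poly_scal. unfold qa.
    pose proof (sum_e I d a (Hd a Ha)) as Hs.
    destruct (Nat.ltb_spec a I); try lia.
    replace (sumd d I) with (S (sumd (fun b => if Nat.eqb b a then (d b - 1)%nat else d b) I)) by lia.
    apply (Poly_prod x (fun b => if Nat.eqb b a then (d b - 1)%nat else d b)).
  - destruct dinf.
    + apply (Poly_ext _ (fun _ => 0)). apply Poly_zero. intros; simpl; ring.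
    + apply Poly_scal. replace (sumd d I + S dinf)%nat with (S (sumd d I) + pred (S (S dinf - 1)))%nat by lia.
      apply (Poly_mul _ _ (Q0 I x d) (fun t => (1 + -1 * t) ^ (S dinf - 1))).
      apply Poly_prod. apply Poly_pow.
Qed.

Lemma Poly_Qd I x d dinf : Poly (sumd d I + dinf + 1) (Qd I x d dinf).
Proof.
  unfold Qd. replace (sumd d I + dinf + 1)%nat with (S (sumd d I) + pred (S dinf))%nat by lia.
  apply (Poly_mul _ _ (Q0 I x d) (fun t => (1 + -1 * t) ^ dinf)).
  apply Poly_prod. apply Poly_pow.
Qed.

Lemma Q0_pos I x d t : (forall a, (a < I)%nat -> 0 < Rabs (x a) < 1) -> -1 <= t <= 1 -> 0 < Q0 I x d t.
Proof.
  intros Hx Ht. apply prod_upto_pos. intros b Hb. apply pow_lt.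
  specialize (Hx b Hb). apply lin_pos; lra.
Qed.

Lemma powerRZ_negnat y l : powerRZ y (- Z.of_nat l) = / y ^ l.
Proof.
  destruct l. simpl. rewrite Rinv_1. auto.
  simpl. rewrite SuccNat2Pos.id_succ. auto.
Qed.

Lemma core I d d0 dinf x s l :
  (forall a, (a < I)%nat -> (1 <= d a)%nat) ->
  (forall a, (a < I)%nat -> 0 < Rabs (x a) < 1) ->
  (m_of I d d0 dinf <= l)%nat ->
  exists g, Alg g /\ 0 < g 1 /\ forall c, /2 < c < 1 ->
    ex_RInt (fun t => Ssum I x s d d0 dinf t * pc I x d d0 dinf t * t ^ 0 * powerRZ (c * t + 1) (- Z.of_nat l)) (-1) 1 /\
    beta I x s d d0 dinf 0 (- Z.of_nat l) c = g c / (1 - c) ^ (l - d0).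
Proof.
  intros Hd Hx Hm. rewrite m_of_eq in Hm.
  assert (Hl : (1 <= l)%nat) by lia.
  assert (Qd_pos : 0 < Qd I x d dinf (-1)).
  { unfold Qd. apply Rmult_lt_0_compat. apply Q0_pos; auto; lra. apply pow_lt; lra. }
  destruct d0 as [|D].
  - destruct (Poly_R0 I x s d dinf Hd) as [lR [HlenR HR]].
    exists (fun c => (1 - c) * Gl 0 l lR c + pc I x d 0 dinf (-1) + (1 - c) ^ l * (/ (1 + c)) ^ l * pc I x d 0 dinf 1).
    split.
    { apply Alg_plus. apply Alg_plus. apply Alg_mult. apply Alg_minus; constructor. apply Alg_Gl. constructor.
      apply Alg_mult. apply Alg_mult. apply Alg_pow. apply Alg_minus; constructor. apply Alg_pow. constructor. constructor. }
    split.
    { replace (1 - 1) with 0 by ring. rewrite pow_i by lia.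
      assert (0 < pc I x d 0 dinf (-1)).
      { unfold pc. fold (Q0 I x d (-1)). simpl pow. rewrite Rmult_1_r.
        replace (1 + -1 * -1) with 2 by ring. apply Rmult_lt_0_compat. apply Q0_pos; auto; lra. apply pow_lt; lra. }
      lra. }
    intros c Hc. assert (Hc' : 0 < c < 1) by lra.
    assert (HI := int_poly lR 0 l c Hc' ltac:(lia)).
    assert (HI' : is_RInt (fun t => Ssum I x s d 0 dinf t * pc I x d 0 dinf t * t ^ 0 * powerRZ (c * t + 1) (- Z.of_nat l)) (-1) 1
                  (Gl 0 l lR c / (1 - c) ^ (l - 0 - 1))).
    { eapply is_RInt_ext. 2: exact HI. intros t Ht. rewrite Rmin_left, Rmax_right in Ht by lra.
      rewrite powerRZ_negnat. rewrite key by (auto; lra). rewrite <- HR.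
      replace (c * t + 1) with (1 + c * t) by ring. simpl pow. simpl INR.
      assert (0 < 1 + c * t) by nra.
      lazymatch goal with |- ?a = ?b => change (@eq R a b) end. field. apply pow_nonzero. lra. }
    split. eexists; exact HI'.
    unfold beta. rewrite (is_RInt_unique _ _ _ _ HI'). rewrite !powerRZ_negnat.
    destruct l as [|l']. lia. replace (S l' - 0 - 1)%nat with l' by lia. replace (S l' - 0)%nat with (S l') by lia.
    rewrite !pow_inv. simpl pow.
    field. repeat split; try lra; try (apply pow_nonzero; lra).
  - destruct (Poly_R0 I x s d dinf Hd) as [lR [HlenR HR]].
    assert (PP : Poly (sumd d I + dinf + 1) (fun t => Rz0 I x s d dinf t * (1 + 1 * t) + INR (S D) * (INR (S D) + 1) * Qd I x d dinf t)).
    { apply Poly_add.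
      replace (sumd d I + dinf + 1)%nat with (sumd d I + dinf + pred 2)%nat by lia.
      apply (Poly_mul _ _ (Rz0 I x s d dinf) (fun t => 1 + 1 * t)). apply Poly_R0; auto. apply Poly_lin.
      apply Poly_scal. apply Poly_Qd. }
    destruct PP as [lP [HlenP HP]].
    exists (fun c => Gl D l lP c + (1 - c) ^ (l - S D) * (/ (1 + c)) ^ l * pc I x d (S D) dinf 1).
    split.
    { apply Alg_plus. apply Alg_Gl.
      apply Alg_mult. apply Alg_mult. apply Alg_pow. apply Alg_minus; constructor. apply Alg_pow. constructor. constructor. }
    split.
    { rewrite Gl_one. replace (1 - 1) with 0 by ring. rewrite (pow_i (l - S D)) by lia.
      assert (H0 : hn lP 0 = Rz0 I x s d dinf (-1) * (1 + 1 * -1) + INR (S D) * (INR (S D) + 1) * Qd I x d dinf (-1)).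
      { rewrite HP. f_equal. ring. }
      rewrite H0.
      replace (1 + 1 * -1) with 0 by ring.
      assert (0 < gfun D (l - D - 2) 1) by apply gfun_one_pos.
      assert (0 < INR (S D)) by (apply lt_0_INR; lia).
      assert (0 < INR (S D) * (INR (S D) + 1) * Qd I x d dinf (-1)).
      { apply Rmult_lt_0_compat; auto. apply Rmult_lt_0_compat; lra. }
      rewrite Rmult_0_r, Rplus_0_l. nra. }
    intros c Hc. assert (Hc' : 0 < c < 1) by lra.
    assert (HI := int_poly lP D l c Hc' ltac:(lia)).
    assert (HI' : is_RInt (fun t => Ssum I x s d (S D) dinf t * pc I x d (S D) dinf t * t ^ 0 * powerRZ (c * t + 1) (- Z.of_nat l)) (-1) 1
                  (Gl D l lP c / (1 - c) ^ (l - D - 1))).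
    { eapply is_RInt_ext. 2: exact HI. intros t Ht. rewrite Rmin_left, Rmax_right in Ht by lra.
      rewrite powerRZ_negnat. rewrite key by (auto; lra). rewrite <- HP.
      replace (c * t + 1) with (1 + c * t) by ring.
      replace (S D - 1)%nat with D by lia.
      replace (1 + 1 * t) with (1 + t) by ring. simpl pow.
      assert (0 < 1 + c * t) by nra.
      lazymatch goal with |- ?a = ?b => change (@eq R a b) end. field. apply pow_nonzero. lra. }
    split. eexists; exact HI'.
    unfold beta. rewrite (is_RInt_unique _ _ _ _ HI'). rewrite !powerRZ_negnat.
    assert (Hpm : pc I x d (S D) dinf (-1) = 0).
    { unfold pc. replace (1 + 1 * -1) with 0 by ring. simpl pow. ring. }
    rewrite Hpm. replace (l - D - 1)%nat with (l - S D)%nat by lia.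
    rewrite !pow_inv. simpl pow.
    field. repeat split; try lra; try (apply pow_nonzero; lra).
Qed.

Lemma smooth_zero : smooth_near (fun _ => 0) 0.
Proof. exists 1. split. lra. intros. apply ex_derive_n_const. Qed.

Lemma pc_flip I x d d0 dinf t : pc I x d d0 dinf t = pc I (fun a => - x a) d dinf d0 (- t).
Proof.
  unfold pc.
  rewrite (prod_upto_ext I (fun a => (1 + x a * t) ^ d a) (fun a => (1 + - x a * - t) ^ d a))
    by (intros; f_equal; ring).
  replace (1 + 1 * t) with (1 + -1 * - t) by ring.
  replace (1 + -1 * t) with (1 + 1 * - t) by ring. ring.
Qed.

Lemma Ssum_flip I x s d d0 dinf t :
  Ssum I x s d d0 dinf t = Ssum I (fun a => - x a) (fun a => - s a) d dinf d0 (- t).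
Proof.
  unfold Ssum.
  rewrite (sum_upto_ext I (fun a => x a * INR (d a) * s a / (1 + x a * t))
                          (fun a => - x a * INR (d a) * - s a / (1 + - x a * - t))).
  2: { intros b _. replace (1 + - x b * - t) with (1 + x b * t) by ring. unfold Rdiv. ring. }
  replace (1 + 1 * - t) with (1 + -1 * t) by ring.
  replace (1 + -1 * - t) with (1 + 1 * t) by ring.
  unfold Rdiv. ring.
Qed.

Lemma RInt_flip (G : R -> R) : ex_RInt G (-1) 1 -> RInt (fun t => G (- t)) (-1) 1 = RInt G (-1) 1.
Proof.
  intros [v Hv]. rewrite (is_RInt_unique _ _ _ _ Hv).
  apply is_RInt_unique.
  assert (H1 : is_RInt G (Ropp 1) (Ropp (-1)) v).
  { replace (Ropp 1) with (-1) by ring. replace (Ropp (-1)) with 1 by ring. exact Hv. }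
  apply (is_RInt_comp_opp G 1 (-1)) in H1.
  apply is_RInt_swap in H1. apply is_RInt_opp in H1.
  rewrite (opp_opp v) in H1.
  eapply is_RInt_ext. 2: exact H1.
  intros t _. apply opp_opp.
Qed.

Lemma beta_flip I x s d d0 dinf l c :
  ex_RInt (fun t => Ssum I (fun a => - x a) (fun a => - s a) d dinf d0 t * pc I (fun a => - x a) d dinf d0 t * t ^ 0
                    * powerRZ (- c * t + 1) (- Z.of_nat l)) (-1) 1 ->
  beta I x s d d0 dinf 0 (- Z.of_nat l) c = beta I (fun a => - x a) (fun a => - s a) d dinf d0 0 (- Z.of_nat l) (- c).
Proof.
  intros Hex. unfold beta. rewrite <- (RInt_flip _ Hex). f_equal.
  - apply RInt_ext. intros t _. rewrite Ssum_flip, pc_flip.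
    replace (- c * - t) with (c * t) by ring. simpl pow. lazymatch goal with |- ?a = ?b => change (@eq R a b) end. ring.
  - rewrite (pc_flip I x d d0 dinf (-1)), (pc_flip I x d d0 dinf 1).
    replace (- -1) with 1 by ring. replace (1 - - c) with (1 + c) by ring.
    replace (1 + - c) with (1 - c) by ring. simpl pow. replace (Ropp 1) with (-1) by ring. lazymatch goal with |- ?a = ?b => change (@eq R a b) end. ring.
Qed.

Theorem lemmaA3 (I : nat) (d : nat -> nat) (d0 dinf : nat) (x s : nat -> R) (l : nat) :
  (1 <= I)%nat ->
  (forall a, (a < I)%nat -> (1 <= d a)%nat) ->
  (forall a, (a < I)%nat -> 0 < Rabs (x a) < 1) ->
  (m_of I d d0 dinf <= l)%nat ->
  (exists (gamma0 o0 : R -> R),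
      smooth_near gamma0 1 /\ smooth_near o0 0 /\ o0 0 = 0 /\ 0 < gamma0 1 /\
      exists eps : R, 0 < eps /\
        forall c, 1 - eps < c < 1 ->
          beta I x s d d0 dinf 0 (- Z.of_nat l) c
          = (gamma0 c + o0 (1 - c)) / (1 - c) ^ (l - d0)) /\
  (exists (gammainf oinf : R -> R),
      smooth_near gammainf (-1) /\ smooth_near oinf 0 /\ oinf 0 = 0 /\ 0 < gammainf (-1) /\
      exists eps : R, 0 < eps /\
        forall c, -1 < c < -1 + eps ->
          beta I x s d d0 dinf 0 (- Z.of_nat l) c
          = (gammainf c + oinf (1 + c)) / (1 + c) ^ (l - dinf)).
Proof.
  intros HI Hd Hx Hm. split.
  - destruct (core I d d0 dinf x s l Hd Hx Hm) as [g [Ag [Gp Hg]]].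
    exists g, (fun _ => 0). split. apply Alg_smooth; auto. split. apply smooth_zero.
    split. reflexivity. split. auto.
    exists (/2). split. lra. intros c Hc. rewrite Rplus_0_r. apply Hg. lra.
  - assert (Hx' : forall a, (a < I)%nat -> 0 < Rabs (- x a) < 1).
    { intros a Ha. rewrite Rabs_Ropp. auto. }
    assert (Hm' : (m_of I d dinf d0 <= l)%nat) by (rewrite m_of_eq in *; lia).
    destruct (core I d dinf d0 (fun a => - x a) (fun a => - s a) l Hd Hx' Hm') as [g [Ag [Gp Hg]]].
    exists (fun c => g (- c)), (fun _ => 0). split. apply smooth_opp, Alg_smooth; auto.
    split. apply smooth_zero. split. reflexivity. split.
    replace (- -1) with 1 by ring. auto.
    exists (/2). split. lra. intros c Hc. destruct (Hg (- c) ltac:(lra)) as [Hex Heq].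
    rewrite (beta_flip I x s d d0 dinf l c Hex). rewrite Heq.
    replace (1 - - c) with (1 + c) by ring. rewrite Rplus_0_r. reflexivity.
Qed.
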